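(* Let $\{\mu_\theta\}_{\theta\in\Theta}$ be a family of Gibbs measures satisfying the uniform Gibbs property with constant $N$ and constants $\mathcal{P}_\theta$, for potentials $\phi_\theta$, and let $L$ satisfy the Loss Assumption. Then for every $\epsilon>0$ there exists $T>0$ such that for all $\theta,\theta'\in\Theta$, $y\in\mathcal{Y}$ and integers $t\ge1$, $$\frac{\int_{\mathcal{X}}\exp(-L^t_\theta(x,y))\,d\mu_\theta(x)}{\int_{\mathcal{X}}\exp(-L^t_{\theta'}(x',y))\,d\mu_{\theta'}(x')}\le N^2\exp\Big(t\big(\omega(d_\Theta(\theta,\theta'))+\epsilon\big)+(t+T)\big(|\mathcal{P}_\theta-\mathcal{P}_{\theta'}|+\|\phi_\theta-\phi_{\theta'}\|\big)\Big),$$ where $\|\cdot\|$ is the sup norm.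
   Context: Discrete time $\mathbb{T}=\mathbb{N}$. $\mathcal{S}$ is a finite alphabet, $\mathcal{X}=\mathcal{S}^{\mathbb{N}}$ with the product topology and metric $d_{\mathcal{X}}(x,x')=2^{-n(x,x')}$, $n(x,x')=\inf\{m:x_m\ne x'_m\}$; $(\Phi x)_s=x_{s+1}$; $\mathcal{F}_r=\sigma(x_0,\dots,x_r)$. $\mathcal{Y}$ is Polish with a measurable map $\Psi$ (iterates $\Psi^t$). $\Theta$ is a compact metric space with metric $d_\Theta$. $\phi^t=\sum_{s=0}^{t-1}\phi\circ\Phi^s$. Uniform Gibbs property: each $\mu_\theta$ is a $\Phi$-invariant Borel probability on $\mathcal{X}$, $\phi_\theta:\mathcal{X}\to\mathbb{R}$ is Hölder continuous, and there are $N>0$ and $\mathcal{P}_\theta\in\mathbb{R}$ with $N^{-1}\le\mu_\theta(\{\bar x:\bar x_i=x_i,0\le i\le t-1\})/\exp(-\mathcal{P}_\theta t+\phi_\theta^t(x))\le N$ for all $\theta$, $x$, $t\ge1$. Loss Assumption: $L:\Theta\times\mathcal{X}\times\mathcal{Y}\to\mathbb{R}$ with (1) for each $\theta$, $L_\theta$ is bounded continuous on $\mathcal{X}\times\mathcal{Y}$ and depends on $x$ only through $(x_0,\dots,x_r)$ for some $r$; (2) $|L_\theta(x,y)-L_{\theta'}(x',y)|\le\omega(d_\Theta(\theta,\theta'))+\omega(d_{\mathcal{X}}(x,x'))$ for some $\omega:[0,\infty)\to[0,\infty)$ with $\omega(0)=\lim_{r\to0^+}\omega(r)=0$. $L^t_\theta(x,y)=\sum_{s=0}^{t-1}L_\theta(\Phi^sx,\Psi^sy)$.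 *)

(* Defs.v *)
From Stdlib Require List.
From HB Require Import structures.
From mathcomp Require Import all_boot all_order all_algebra.
From mathcomp Require Import all_classical all_reals all_analysis.

Set Implicit Arguments.
Unset Strict Implicit.
Unset Printing Implicit Defensive.
Import Order.TTheory GRing.Theory Num.Theory.
Local Open Scope classical_set_scope.
Local Open Scope ring_scope.

Section Defs.
Variable R : realType.

Section Shift.
Variable S : pointedType.   (* finiteness is a separate hypothesis *)

Definition shiftX (x : nat -> S) : nat -> S := fun s => x s.+1.

Definition dX (x x' : nat -> S) : R :=
  match pselect (exists m, x m != x' m) with
  | left h => (2^-1) ^+ (ex_minn h)
  | right _ => 0
  end.

(* open sets of the metric d_X (= the product topology) *)
Definition openX (U : set (nat -> S)) : Prop :=
  forall x, U x -> exists2 e : R, 0 < e & forall x', dX x x' < e -> U x'.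

Definition Xm := g_sigma_algebraType openX.

Definition cyl (x : nat -> S) (t : nat) : set Xm :=
  [set xb | forall i, (i < t)%N -> xb i = x i].

Definition birkhoff (phi : (nat -> S) -> R) (t : nat) (x : nat -> S) : R :=
  \sum_(s < t) phi (iter s shiftX x).

Definition holder (phi : (nat -> S) -> R) : Prop :=
  exists C alpha : R, 0 < alpha /\
    forall x x', `|phi x - phi x'| <= C * powR (dX x x') alpha.

Definition supnorm (f : (nat -> S) -> R) : R := sup (range (fun x => `|f x|)).

Definition shift_invariant (mu : probability Xm R) : Prop :=
  forall A : set Xm, measurable A -> mu (shiftX @^-1` A) = mu A.

End Shift.

Definition uniform_Gibbs (S : pointedType) (Theta : Type)
  (mu : Theta -> probability (Xm S) R) (phi : Theta -> (nat -> S) -> R)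
  (N : R) (P : Theta -> R) : Prop :=
  0 < N /\
  forall th, shift_invariant (mu th) /\ holder (phi th) /\
    forall (x : nat -> S) (t : nat), (1 <= t)%N ->
      ((N^-1 * expR (- P th * t%:R + birkhoff (phi th) t x))%:E
         <= mu th (cyl x t))%E /\
      (mu th (cyl x t) <= (N * expR (- P th * t%:R + birkhoff (phi th) t x))%:E)%E.

Definition is_metric (T : Type) (d : T -> T -> R) : Prop :=
  [/\ forall a b, 0 <= d a b, forall a b, d a b = 0 <-> a = b,
      forall a b, d a b = d b a & forall a b c, d a c <= d a b + d b c].

Definition open_d (T : Type) (d : T -> T -> R) (U : set T) : Prop :=
  forall a, U a -> exists2 e : R, 0 < e & forall b, d a b < e -> U b.

Definition compact_d (T : Type) (d : T -> T -> R) : Prop :=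
  forall (I : Type) (U : I -> set T), (forall i, open_d d (U i)) ->
    [set: T] `<=` \bigcup_(i in [set: I]) U i ->
    exists s : seq I, [set: T] `<=` \bigcup_(i in [set i | Stdlib.Lists.List.In i s]) U i.

Definition separable (Y : topologicalType) : Prop :=
  exists D : set Y, countable D /\ dense D.

Definition borel_measurable (Y : topologicalType) (f : Y -> Y) : Prop :=
  forall B : set Y, <<s open >> B -> <<s open >> (f @^-1` B).

Definition loss_assumption (S : pointedType) (Theta : Type) (Y : topologicalType)
  (dT : Theta -> Theta -> R) (L : Theta -> (nat -> S) -> Y -> R)
  (omega : R -> R) : Prop :=
  (forall th,
     (exists M : R, forall x y, `|L th x y| <= M) /\
     (* continuity on X x Y (X with the d_X topology = product topology) *)
     (forall x y e, 0 < e -> exists2 delta : R, 0 < delta &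
        \forall y' \near y, forall x', dX x x' < delta ->
          `|L th x' y' - L th x y| < e) /\
     (exists r : nat, forall x x' y, (forall i, (i <= r)%N -> x i = x' i) ->
          L th x y = L th x' y)) /\
  (forall r, 0 <= r -> 0 <= omega r) /\ omega 0 = 0 /\
  omega x @[x --> 0^'+] --> 0 /\
  (forall th th' x x' y,
     `|L th x y - L th' x' y| <= omega (dT th th') + omega (dX x x')).

Definition lossT (S : pointedType) (Theta Y : Type)
  (L : Theta -> (nat -> S) -> Y -> R) (Psi : Y -> Y)
  (th : Theta) (t : nat) (x : nat -> S) (y : Y) : R :=
  \sum_(s < t) L th (iter s (@shiftX S) x) (iter s Psi y).

End Defs.

(* Main.v *)
Require Import Defs.
From HB Require Import structures.
From mathcomp Require Import all_boot all_order all_algebra.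
From mathcomp Require Import all_classical all_reals all_analysis.
From mathcomp Require Import ring lra.
Import Order.TTheory GRing.Theory Num.Theory.
Local Open Scope classical_set_scope.
Local Open Scope ring_scope.

Section DX.
Variable R : realType.
Variable S : pointedType.

Lemma half_bounds : (0:R) < 2^-1 /\ (2^-1 : R) < 1.
Proof. split; lra. Qed.

Lemma dX_ge0 (x x' : nat -> S) : 0 <= @dX R S x x'.
Proof.
rewrite /dX; case: pselect => // h; apply: exprn_ge0; lra.
Qed.

Lemma dX_le (x x' : nat -> S) m : (forall i, (i < m)%N -> x i = x' i) ->
  @dX R S x x' <= (2^-1) ^+ m.
Proof.
move=> hx; rewrite /dX; case: pselect => h; last by apply: exprn_ge0; lra.
case: ex_minnP => k hk _.
have hkm : (m <= k)%N.
  rewrite leqNgt; apply/negP => hkm; move: hk; rewrite hx // eqxx //.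
by rewrite ler_iXn2l //; lra.
Qed.

Lemma dX_lt (x x' : nat -> S) n : @dX R S x x' < (2^-1) ^+ n ->
  forall i, (i < n)%N -> x i = x' i.
Proof.
move=> hd i hi; apply/eqP; apply/negPn/negP => hne.
move: hd; rewrite /dX; case: pselect => h; last by exfalso; apply: h; exists i.
case: ex_minnP => k hk hmin.
have hki := hmin i hne.
rewrite ltr_iXn2l; [|lra|lra]. 
by rewrite ltnNge (leq_trans hki (ltnW hi)).
Qed.

Lemma cyl_open (x : nat -> S) n : @openX R S (@cyl R S x n).
Proof.
move=> x' hx'; exists ((2^-1) ^+ n); first by apply: exprn_gt0; lra.
move=> x'' hd i hi; rewrite -(@dX_lt x' x'' n hd i hi); exact: hx' i hi.
Qed.

Lemma cyl_meas (x : nat -> S) n : @measurable _ (Xm R S) (@cyl R S x n).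
Proof. apply: sub_gen_smallest; exact: cyl_open. Qed.
End DX.
Arguments dX_le {R S x x' m}.

Section Aux.
Variable R : realType.
Variable S : pointedType.
Variable s : seq S.
Hypothesis hs : forall a : S, a \in s.

Fixpoint words n : seq (seq S) :=
  if n is n'.+1 then [seq rcons w a | w <- words n', a <- s] else [:: [::]].

Lemma mkseq_words (x : nat -> S) n : mkseq x n \in words n.
Proof.
elim: n => [|n IH] //=; rewrite mkseqS; exact: allpairs_f.
Qed.

Lemma size_words n w : w \in words n -> size w = n.
Proof.
elim: n w => [|n IH] w /=; first by rewrite inE => /eqP ->.
case/allpairsP => [[u a]] /= [hu _ ->]; by rewrite size_rcons (IH _ hu).
Qed.

Definition W n := undup (words n).
Definition ext (w : seq S) : nat -> S := fun i => nth point w i.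

Definition factor n (f : (nat -> S) -> R) :=
  forall x x', (forall i, (i < n)%N -> x i = x' i) -> f x = f x'.

Lemma cyl_ext x n w : size w = n ->
  (@cyl R S (ext w) n x <-> mkseq x n = w).
Proof.
move=> hw; split.
- move=> h; apply: (@eq_from_nth _ point); first by rewrite size_mkseq hw.
  by move=> i; rewrite size_mkseq => hi; rewrite nth_mkseq // h.
- by move=> <- i hi; rewrite /ext nth_mkseq.
Qed.

Lemma factor_sum n f (hf : factor n f) x :
  f x = \sum_(w <- W n) f (ext w) * \1_(@cyl R S (ext w) n) x.
Proof.
have hm : mkseq x n \in W n by rewrite mem_undup mkseq_words.
rewrite (bigD1_seq (mkseq x n)) ?undup_uniq //=.
rewrite big1_seq ?addr0; last first.
  move=> w /andP[hne hw]; rewrite indicE.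
  have hsz : size w = n by apply: size_words; rewrite -mem_undup.
  case: (boolP (x \in @cyl R S (ext w) n)) => hx; last by rewrite mulr0.
  move: hx; rewrite inE => /(@cyl_ext x n w hsz) h.
  by move: hne; rewrite h eqxx.
rewrite indicE mem_set ?mulr1; last by move=> i hi; rewrite /ext nth_mkseq.
by apply: hf => i hi; rewrite /ext nth_mkseq.
Qed.
End Aux.
Arguments words {S} s n.
Arguments W {S} s n.
Arguments ext {S} w i.
Arguments factor {R S} n f.
Arguments factor_sum {R S s} hs {n f} hf x.
Arguments cyl_ext {R S} x n w.


Lemma factor_mono (R : realType) (S : pointedType) n k (f : (nat -> S) -> R) : (n <= k)%N -> factor n f -> factor k f.
Proof. move=> hnk hf x x' hx; apply: hf => i hi; apply: hx; exact: leq_trans hi hnk. Qed.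

Lemma iter_shift (S : pointedType) s (x : nat -> S) i : iter s (@shiftX S) x i = x (s + i)%N.
Proof. by elim: s x i => [|s IH] x i //=; rewrite /shiftX IH addSnnS. Qed.

Section Rep.
Variable R : realType.
Variable S : pointedType.
Variable s : seq S.
Hypothesis hs : forall a : S, a \in s.

Lemma rep (mu : probability (Xm R S) R) n (f : (nat -> S) -> R)
  (f0 : forall x, 0 <= f x) (hf : factor n f) :
  Rintegral mu setT f =
  \sum_(w <- W s n) f (ext w) * fine (mu (@cyl R S (ext w) n)).
Proof.
rewrite /Rintegral.
under eq_integral => x _ do rewrite (factor_sum hs hf x) -sumEFin.
rewrite ge0_integral_sum //; last first.
- move=> w x _; rewrite lee_fin mulr_ge0 //; exact: indic_ge0.
- move=> w; apply/measurable_realfun.measurable_EFinP; apply: measurable_realfun.measurable_funM => //.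
  apply: measurable_realfun.measurable_indic; exact: cyl_meas.
have hw : forall w, (\int[mu]_x (f (ext w) * \1_(@cyl R S (ext w) n) x)%:E)%E
    = ((f (ext w))%:E * mu (@cyl R S (ext w) n))%E.
  move=> w.
  rewrite (@integralZl_indic _ _ _ mu setT measurableT (fun _ => @cyl R S (ext w) n) (f (ext w))).
  - by rewrite integral_indic ?setIT //; exact: cyl_meas.
  - by move=> h; move: (f0 (ext w)); rewrite leNgt h.
  - exact: cyl_meas.
under eq_bigr => w _ do rewrite hw.
rewrite -sum_fine; last first.
  move=> w _; rewrite fin_numM //; apply: fin_num_measure; exact: cyl_meas.
apply: eq_bigr => w _; rewrite fineM //; apply: fin_num_measure; exact: cyl_meas.
Qed.

Lemma rep_le (mu : probability (Xm R S) R) k (f g : (nat -> S) -> R) c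
  (f0 : forall x, 0 <= f x) (g0 : forall x, 0 <= g x)
  (hf : factor k f) (hg : factor k g) (hfg : forall x, f x <= c * g x) :
  Rintegral mu setT f <= c * Rintegral mu setT g.
Proof.
rewrite (rep mu k f f0 hf) (rep mu k g g0 hg) mulr_sumr; apply: ler_sum => w _.
rewrite mulrA; apply: ler_wpM2r; last exact: hfg.
by apply: fine_ge0; apply: measure_ge0.
Qed.

Lemma gibbs_cmp (mu mu' : probability (Xm R S) R) n (h : (nat -> S) -> R) K
  (h0 : forall x, 0 <= h x) (hh : factor n h)
  (hK : forall w, size w = n ->
     fine (mu (@cyl R S (ext w) n)) <= K * fine (mu' (@cyl R S (ext w) n))) :
  Rintegral mu setT h <= K * Rintegral mu' setT h.
Proof.
rewrite (rep mu n h h0 hh) (rep mu' n h h0 hh) mulr_sumr !big_seq; apply: ler_sum => w hw.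
rewrite mulrCA; apply: ler_wpM2l => //; apply: hK.
by apply: (@size_words _ s); rewrite -mem_undup.
Qed.
End Rep.

Lemma near0 {R : realType} {omega : R -> R} (h : omega x @[x --> 0^'+] --> 0) (e : R) (e0 : 0 < e) :
  exists2 d : R, 0 < d & forall u, 0 < u < d -> `|omega u| < e.
Proof.
have := @cvgr_dist_lt _ _ _ _ _ omega 0 h e e0.
case => d /= d0 Hd.
exists d => // u /andP[u0 ud].
have := Hd u; rewrite /ball_ /= sub0r normrN gtr0_norm // => /(_ ud u0).
by rewrite sub0r normrN.
Qed.

Lemma holder_bdd (R : realType) (S : pointedType) (g : (nat -> S) -> R) :
  holder g -> exists M, forall x, `|g x| <= M.
Proof.
case=> C [a [a0 H]].
pose p : nat -> S := fun _ => point.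
exists (`|g p| + `|C|) => x.
have -> : g x = (g x - g p) + g p by rewrite subrK.
rewrite addrC; apply: (le_trans (ler_normD _ _)); rewrite lerD2l.
apply: (le_trans (H x p)).
have q0 : 0 <= powR (dX R x p) a by apply: powR_ge0.
have q1 : powR (dX R x p) a <= 1.
  have hd1 : dX R x p <= 1 by rewrite -(expr0 (2^-1 : R)); apply: dX_le.
  have h := @ge0_ler_powR R a (ltW a0) (dX R x p) 1.
  rewrite (powR1 R) /= in h; apply: h => //; rewrite nnegrE //; exact: dX_ge0.
apply: (le_trans (y := `|C| * powR (dX R x p) a)).
  by apply: ler_wpM2r => //; apply: ler_norm.
by rewrite -[leRHS]mulr1; apply: ler_wpM2l.
Qed.

Lemma supnorm_ge (R : realType) (S : pointedType) (f : (nat -> S) -> R) M :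
  (forall x, `|f x| <= M) -> forall x, `|f x| <= supnorm f.
Proof.
move=> hM x; apply: sup_upper_bound; last by exists x.
split; first by exists `|f x|, x.
by exists M => _ [z _ <-].
Qed.

Lemma mkseq_agree (S : Type) (x x' : nat -> S) n :
  (forall i, (i < n)%N -> x i = x' i) -> mkseq x n = mkseq x' n.
Proof.
move=> h; apply/eq_in_map => i; rewrite mem_iota add0n => /andP[_ hi]; exact: h.
Qed.

Theorem lemma6p2 (R : realType)
  (S : pointedType) (finS : finite_set [set: S])
  (Theta : Type) (dT : Theta -> Theta -> R)
  (Y : completePseudoMetricType R) (Psi : Y -> Y)
  (mu : Theta -> probability (Xm R S) R) (phi : Theta -> (nat -> S) -> R)
  (N : R) (P : Theta -> R)
  (L : Theta -> (nat -> S) -> Y -> R) (omega : R -> R) :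
  is_metric dT -> compact_d dT ->
  hausdorff_space Y -> separable Y -> borel_measurable Psi ->
  uniform_Gibbs mu phi N P ->
  loss_assumption dT L omega ->
  forall eps : R, 0 < eps -> exists2 T : R, 0 < T &
    forall (th th' : Theta) (y : Y) (t : nat), (1 <= t)%N ->
      Rintegral (mu th) setT (fun x : Xm R S => expR (- lossT L Psi th t x y)) /
      Rintegral (mu th') setT (fun x' : Xm R S => expR (- lossT L Psi th' t x' y))
      <= N ^+ 2 * expR (t%:R * (omega (dT th th') + eps)
                        + (t%:R + T) * (`|P th - P th'|
                                        + supnorm (fun x => phi th x - phi th' x))).
Proof.
move=> hdT _ _ _ _ [hN0 HG] [HL [om0 [om00 [omlim Hlip]]]] eps eps0.
case: hdT => d0 deq dsym dtri.
have [s hs0] : exists s : seq S, [set: S] = [set` s] by apply/finite_seqP.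
have hs : forall a : S, a \in s.
  by move=> a; have : [set: S] a by []; rewrite hs0.
have e20 : 0 < eps / 2 by lra.
have [del del0 Hdel] := @near0 _ _ omlim _ e20.
pose m := (Num.Def.trunc (del^-1)).+1.
have hm : (2^-1 : R) ^+ m < del.
  have h1 : del^-1 < m%:R by apply: truncnS_gt.
  have h2 : (m%:R : R) < (2 ^ m)%:R by rewrite ltr_nat; apply: ltn_expl.
  rewrite exprVn invf_plt ?posrE ?exprn_gt0 //.
  by apply: lt_trans h1 _; rewrite -natrX.
have hom : forall u u' : nat -> S, (forall i, (i < m)%N -> u i = u' i) ->
    omega (dX R u u') <= eps / 2.
  move=> u u' hu; have hle := dX_le (R:=R) hu; have hge := dX_ge0 R S u u'.
  case: (ltrgtP 0 (dX R u u')) => hd; last first.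
  - by rewrite -hd om00; lra.
  - by move: hd; rewrite ltNge hge.
  apply: ltW; apply: le_lt_trans (ler_norm _) _; apply: Hdel.
  by rewrite hd (le_lt_trans hle hm).
exists m%:R; first by rewrite ltr0n.
move=> th th' y t ht.
pose n := (t + m)%N.
have hn : (1 <= n)%N by rewrite (leq_trans ht) // leq_addr.
have hloss : forall th1 th2 (x x' : nat -> S), (forall i, (i < n)%N -> x i = x' i) ->
    lossT L Psi th1 t x y - lossT L Psi th2 t x' y
      <= t%:R * (omega (dT th1 th2) + eps / 2).
  move=> th1 th2 x x' hx; rewrite /lossT -sumrB.
  have -> : t%:R * (omega (dT th1 th2) + eps / 2) =
            \sum_(j < t) (omega (dT th1 th2) + eps / 2).
    by rewrite sumr_const card_ord mulr_natl.
  apply: ler_sum => j _.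
  apply: le_trans (ler_norm _) _; apply: le_trans (Hlip _ _ _ _ _) _.
  rewrite lerD2l; apply: hom => i hi; rewrite !iter_shift; apply: hx.
  by rewrite -addSn leq_add // ltnW.
have hexp : forall th1 th2 (x x' : nat -> S), (forall i, (i < n)%N -> x i = x' i) ->
    expR (- lossT L Psi th1 t x y)
      <= expR (t%:R * (omega (dT th1 th2) + eps / 2)) * expR (- lossT L Psi th2 t x' y).
  move=> th1 th2 x x' hx; rewrite -expRD ler_expR.
  have := hloss th2 th1 x' x (fun i hi => esym (hx i hi)); rewrite dsym; lra.
have hfac : forall th1, exists k, factor k (fun x => expR (- lossT L Psi th1 t x y)).
  move=> th1; have [_ [_ [r Hr]]] := HL th1.
  exists (t + r)%N => x x' hx; congr (expR (- _)); apply: eq_bigr => j _.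
  apply: Hr => i hi; rewrite !iter_shift; apply: hx.
  by rewrite -addSn leq_add.
pose f1 := fun x : nat -> S => expR (- lossT L Psi th t x y).
pose f2 := fun x : nat -> S => expR (- lossT L Psi th' t x y).
pose h := fun x : nat -> S => f1 (ext (mkseq x n)).
have hagree : forall x : nat -> S, forall i, (i < n)%N -> x i = ext (mkseq x n) i.
  by move=> x i hi; rewrite /ext nth_mkseq.
have hh : factor n h.
  by move=> x x' hx; rewrite /h (@mkseq_agree _ _ _ _ hx).
have h0 : forall x, 0 <= h x by move=> x; apply: expR_ge0.
have [k1 hk1] := hfac th.
have [k2 hk2] := hfac th'.
have st1 : Rintegral (mu th) setT f1 <= expR (t%:R * (0 + eps / 2)) * Rintegral (mu th) setT h.
  apply: (@rep_le R S s hs (mu th) (maxn n k1)) => //.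
  - by move=> x; apply: expR_ge0.
  - exact: factor_mono (leq_maxr _ _) hk1.
  - exact: factor_mono (leq_maxl _ _) hh.
  - move=> x; have := hexp th th x _ (hagree x).
    by rewrite (proj2 (deq _ _) erefl) om00.
have st3 : Rintegral (mu th') setT h <= expR (t%:R * (omega (dT th th') + eps / 2))
                                    * Rintegral (mu th') setT f2.
  apply: (@rep_le R S s hs (mu th') (maxn n k2)) => //.
  - by move=> x; apply: expR_ge0.
  - exact: factor_mono (leq_maxl _ _) hh.
  - exact: factor_mono (leq_maxr _ _) hk2.
  - move=> x; apply: hexp => i hi; rewrite -hagree //.
pose D := `|P th - P th'| + supnorm (fun x => phi th x - phi th' x).
have [M1 HM1] := @holder_bdd R S _ (proj1 (proj2 (HG th))).
have [M2 HM2] := @holder_bdd R S _ (proj1 (proj2 (HG th'))).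
have hsup : forall u, `|phi th u - phi th' u| <= supnorm (fun x => phi th x - phi th' x).
  apply: (@supnorm_ge R S _ (M1 + M2)) => u.
  by apply: le_trans (ler_normB _ _) _; apply: lerD.
have st2 : Rintegral (mu th) setT h <= N ^+ 2 * expR (n%:R * D) * Rintegral (mu th') setT h.
  apply: (@gibbs_cmp R S s hs _ _ n h _ h0 hh) => w hw.
  set z := ext w.
  have [_ [_ Hc]] := HG th; have [_ hi] := Hc z n hn.
  have [_ [_ Hc']] := HG th'; have [lo' _] := Hc' z n hn.
  have fin1 : mu th (@cyl R S z n) \is a fin_num by apply: fin_num_measure; exact: cyl_meas.
  have fin2 : mu th' (@cyl R S z n) \is a fin_num by apply: fin_num_measure; exact: cyl_meas.
  rewrite -(fineK fin1) lee_fin in hi; rewrite -(fineK fin2) lee_fin in lo'.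
  set a := - P th * n%:R + birkhoff (phi th) n z in hi.
  set b := - P th' * n%:R + birkhoff (phi th') n z in lo'.
  have hB : birkhoff (phi th) n z - birkhoff (phi th') n z
             <= n%:R * supnorm (fun x => phi th x - phi th' x).
    rewrite /birkhoff -sumrB.
    have -> : n%:R * supnorm (fun x => phi th x - phi th' x) =
              \sum_(j < n) supnorm (fun x => phi th x - phi th' x).
      by rewrite sumr_const card_ord mulr_natl.
    apply: ler_sum => j _; apply: le_trans (ler_norm _) _; exact: hsup.
  have hP : (P th' - P th) * n%:R <= n%:R * `|P th - P th'|.
    rewrite mulrC; apply: ler_wpM2l => //; rewrite distrC; exact: ler_norm.
  have hab : a <= n%:R * D + b by rewrite /a /b /D; lra.
  apply: le_trans hi _.
  apply: (@le_trans _ _ (N ^+ 2 * expR (n%:R * D) * (N^-1 * expR b))).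
    have -> : N ^+ 2 * expR (n%:R * D) * (N^-1 * expR b) = N * expR (n%:R * D + b).
      have hN : N * N^-1 = 1 := mulfV (lt0r_neq0 hN0).
      rewrite (expRD (n%:R * D) b); move: (expR (n%:R * D)) (expR b) => E1 E2.
      transitivity ((N * N^-1) * (N * (E1 * E2))); first by ring.
      by rewrite hN mul1r.
    by apply: ler_wpM2l; [exact: ltW | rewrite ler_expR].
  apply: ler_wpM2l => //; apply: mulr_ge0; [exact: exprn_ge0 (ltW hN0)|exact: expR_ge0].
have hE : t%:R * (0 + eps / 2) + n%:R * D + t%:R * (omega (dT th th') + eps / 2)
   = t%:R * (omega (dT th th') + eps) + (t%:R + m%:R) * D.
  rewrite /n natrD; move: (t%:R) (m%:R) (omega (dT th th')) (D) (eps) => a1 a2 a3 a4 a5; by field.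
rewrite -/D -hE !expRD.
set A := Rintegral (mu th) setT _.
set B := Rintegral (mu th') setT _.
have B0 : 0 <= B by apply: Rintegral_ge0 => x _; apply: expR_ge0.
have hR0 : 0 <= N ^+ 2 * (expR (t%:R * (0 + eps / 2)) * expR (n%:R * D) *
                         expR (t%:R * (omega (dT th th') + eps / 2))).
  by apply: mulr_ge0; [exact: exprn_ge0 (ltW hN0)|rewrite !mulr_ge0 // expR_ge0].
have [hB|hB] := eqVneq B 0; first by rewrite hB invr0 mulr0.
have Bpos : 0 < B by rewrite lt_neqAle eq_sym hB B0.
rewrite ler_pdivrMr //.
have c1 := expR_ge0 (t%:R * (0 + eps / 2)).
have c2 : 0 <= N ^+ 2 * expR (n%:R * D) by apply: mulr_ge0; [exact: exprn_ge0 (ltW hN0)|exact: expR_ge0].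
apply: (le_trans st1).
apply: (le_trans (ler_wpM2l c1 st2)).
apply: (le_trans (ler_wpM2l c1 (ler_wpM2l c2 st3))).
rewrite le_eqVlt; apply/orP; left; apply/eqP; rewrite /B; ring.
Qed.
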